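(* Let $G$ be a connected graph of order $n \ge 2$, and let $k$ be a positive integer. Then $\dim_{k,f}(G)=\frac{n}{2}$ if and only if $G \in H[\mathcal{K} \cup \overline{\mathcal{K}}]$ for some connected graph $H$.
   Context: All graphs are finite, simple, undirected and connected. $d(x,y)$ is the length of a shortest $x$–$y$ path in $G$. For a positive integer $k$, $d_k(x,y)=\min\{d(x,y),k+1\}$ and $R_k\{x,y\}=\{z\in V(G): d_k(x,z)\neq d_k(y,z)\}$. For a function $g$ on $V(G)$ and $U\subseteq V(G)$, $g(U)=\sum_{s\in U}g(s)$. A function $h:V(G)\to[0,1]$ is a $k$-truncated resolving function of $G$ if $h(R_k\{x,y\})\ge 1$ for all distinct $x,y\in V(G)$; $\dim_{k,f}(G)$ is the minimum of $h(V(G))$ over all such $h$. Let $\mathcal{K}=\{K_a: a\ge 2\}$ and $\overline{\mathcal{K}}=\{\overline{K}_b: b\ge 2\}$. For a connected graph $H$, $H[\mathcal{K}\cup\overline{\mathcal{K}}]$ is the family of graphs obtained from $H$ by replacing each vertex $u_i\in V(H)$ by a graph $H_i\in\mathcal{K}\cup\overline{\mathcal{K}}$, where each vertex of $H_i$ is adjacent to each vertex of $H_j$ ($i\neq j$) if and only if $u_iu_j\in E(H)$. *)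

(* Defs.v *)
From mathcomp Require Import all_boot all_order all_algebra.
Set Implicit Arguments. Unset Strict Implicit. Unset Printing Implicit Defensive.
Import Order.TTheory GRing.Theory Num.Theory.

Section Graphs.
Variable T : finType.
Variable e : rel T.

Definition simple_graph := symmetric e /\ irreflexive e.
Definition connected_graph := forall x y : T, connect e x y.

Fixpoint walkn (m : nat) (x y : T) : bool :=
  if m is m'.+1 then [exists z, e x z && walkn m' z y] else x == y.

(* d(x,y): least m with a walk (equivalently a path) of length m from x to y;
   in a connected graph on #|T| vertices this is < #|T|. *)
Definition dist (x y : T) : nat := find (fun m => walkn m x y) (iota 0 #|T|).

Definition distk (k : nat) (x y : T) : nat := minn (dist x y) k.+1.

Definition Rk (k : nat) (x y : T) : {set T} :=
  [set z | distk k x z != distk k y z].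

Variable R : realFieldType.

Definition k_trunc_resolving (k : nat) (h : T -> R) : Prop :=
  (forall z, 0 <= h z <= 1)%R /\
  forall x y, x != y -> (1 <= \sum_(z in Rk k x y) h z)%R.

Definition is_dim_kf (k : nat) (r : R) : Prop :=
  (exists h, k_trunc_resolving k h /\ (\sum_(z : T) h z)%R = r) /\
  (forall h, k_trunc_resolving k h -> (r <= \sum_(z : T) h z)%R).
End Graphs.

(* G (on T with adjacency e) belongs to H[K ∪ K̄] for some connected graph H:
   vertices of G are partitioned by f into blocks f^-1(u), u in V(H), each of
   size >= 2, each block is a clique (b u = true) or independent (b u = false),
   and distinct blocks are completely joined iff adjacent in H. *)
Definition in_blowup_family (T : finType) (e : rel T) : Prop :=
  exists (U : finType) (eH : rel U) (f : T -> U) (b : U -> bool),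
    simple_graph eH /\ connected_graph eH /\
    (forall u : U, 2 <= #|[set x | f x == u]|)%N /\
    (forall x y : T, x != y ->
        e x y = (if f x == f y then b (f x) else eH (f x) (f y))).

(* Main.v *)
Require Import Defs.
From mathcomp Require Import all_boot all_order all_algebra.
From mathcomp Require Import zify ring lra.
Set Implicit Arguments. Unset Strict Implicit. Unset Printing Implicit Defensive.
Import Order.TTheory GRing.Theory Num.Theory.

Section Dist.
Variables (T : finType) (e : rel T).
Hypothesis esym : symmetric e.
Hypothesis eirr : irreflexive e.
Hypothesis N2 : (2 <= #|T|)%N.

Lemma dist_le m x y : (m < #|T|)%N -> walkn e m x y -> (dist e x y <= m)%N.
Proof.
move=> lt wm; rewrite /dist leqNgt; apply/negP => /(before_find 0).
by rewrite nth_iota // add0n wm.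
Qed.

Lemma dist_walk x y : (dist e x y < #|T|)%N -> walkn e (dist e x y) x y.
Proof.
move=> lt; have := @nth_find _ 0 (fun m => walkn e m x y) (iota 0 #|T|).
rewrite has_find size_iota => /(_ lt); rewrite nth_iota // add0n.
Qed.

Lemma dist_leN x y : (dist e x y <= #|T|)%N.
Proof. by rewrite /dist -[X in (_ <= X)%N](size_iota 0) find_size. Qed.

Lemma dist_self x : dist e x x = 0%N.
Proof. apply/eqP; rewrite -leqn0; apply: dist_le => /=; [exact: ltnW N2 | exact: eqxx]. Qed.

Lemma dist_neq0 x y : x != y -> dist e x y != 0%N.
Proof.
move=> nxy; apply/eqP=> d0; have := @dist_walk x y; rewrite d0 /= (negbTE nxy).
by move/(_ (ltnW N2)).
Qed.

Lemma dist1 x y : x != y -> (dist e x y == 1%N) = e x y.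
Proof.
move=> nxy; apply/idP/idP.
  move/eqP=> d1; have := @dist_walk x y; rewrite d1 /= => /(_ N2).
  by case/existsP=> z /andP[exz /eqP <-].
move=> exy; have := @dist_le 1 x y N2.
have -> : walkn e 1 x y by apply/existsP; exists y; rewrite exy eqxx.
have := dist_neq0 nxy; move=> ? /(_ isT); lia.
Qed.

Lemma twin_dist_le x y z : (forall w, w != x -> w != y -> e x w = e y w) ->
  z != x -> (dist e y z <= dist e x z)%N.
Proof.
move=> tw zx; have := dist_leN x z; rewrite leq_eqVlt => /orP[/eqP ->|lt].
  exact: dist_leN.
have := dist_walk lt; case Ed: (dist e x z) => [|m] /=.
  by rewrite eq_sym (negbTE zx).
case/existsP=> w /andP[exw wm].
have mlt : (m < #|T|)%N by lia.
case: (eqVneq w y) => [wy|wy].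
  subst w; have := dist_le mlt wm; lia.
apply: dist_le; first by rewrite -Ed.
rewrite /=; apply/existsP; exists w; rewrite wm andbT -tw //.
by apply/eqP=> wx; subst w; rewrite eirr in exw.
Qed.

Lemma twin_dist x y z : (forall w, w != x -> w != y -> e x w = e y w) ->
  z != x -> z != y -> dist e x z = dist e y z.
Proof.
move=> tw zx zy; apply/eqP; rewrite eqn_leq !twin_dist_le //.
by move=> w wy wx; rewrite tw.
Qed.

Lemma Rk_l k x y : x != y -> x \in Rk e k x y.
Proof.
move=> nxy; rewrite inE /distk dist_self; rewrite eq_sym in nxy.
have := dist_neq0 nxy; lia.
Qed.

Lemma Rk_sym k x y : Rk e k x y = Rk e k y x.
Proof. by apply/setP=> z; rewrite !inE eq_sym. Qed.

Lemma Rk_r k x y : x != y -> y \in Rk e k x y.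
Proof. by rewrite Rk_sym eq_sym; apply: Rk_l. Qed.

Lemma Rk_twin k x y : x != y -> (forall w, w != x -> w != y -> e x w = e y w) ->
  Rk e k x y = [set x; y].
Proof.
move=> nxy tw; apply/setP=> z; rewrite !inE.
case: (eqVneq z x) => [->|zx]; first by have := Rk_l k nxy; rewrite inE.
case: (eqVneq z y) => [->|zy]; first by have := Rk_r k nxy; rewrite inE.
by rewrite /distk (twin_dist tw zx zy) eqxx.
Qed.

Lemma distk1 k x y : (0 < k)%N -> (distk e k x y == 1%N) = (dist e x y == 1%N).
Proof. rewrite /distk => k0; apply/eqP/eqP; lia. Qed.

End Dist.

Section Twins.
Variables (T : finType) (e : rel T).
Hypothesis esym : symmetric e.
Hypothesis eirr : irreflexive e.
Hypothesis Hconn : connected_graph e.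

Definition tw x y := [forall w, (w != x) ==> (w != y) ==> (e x w == e y w)].

Lemma twP x y : reflect (forall w, w != x -> w != y -> e x w = e y w) (tw x y).
Proof.
apply: (iffP forallP) => [H w wx wy | H w].
  by move: (H w); rewrite wx wy => /eqP.
by apply/implyP=> wx; apply/implyP=> wy; apply/eqP; apply: H.
Qed.

Lemma tw_refl x : tw x x.
Proof. by apply/twP. Qed.

Lemma tw_sym x y : tw x y -> tw y x.
Proof. by move/twP=> H; apply/twP=> w wy wx; rewrite H. Qed.

Lemma tw_trans x y z : tw x y -> tw y z -> tw x z.
Proof.
move=> /twP Hxy /twP Hyz.
case: (eqVneq x y) => [E|nxy]; first by subst; exact/twP.
case: (eqVneq y z) => [E|nyz]; first by subst; exact/twP.
case: (eqVneq x z) => [E|nxz]; first by subst; exact: tw_refl.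
apply/twP => w wx wz.
case: (eqVneq w y) => [->|wy]; last by rewrite Hxy // Hyz.
have h1 : e x z = e y z by apply: Hxy; rewrite eq_sym.
have h2 : x != z by [].
have h3 : e y x = e z x by apply: Hyz.
by rewrite (esym x y) h3 (esym z x) h1 esym.
Qed.

Definition rep x := odflt x [pick y | tw x y].

Lemma rep_tw x : tw x (rep x).
Proof. by rewrite /rep; case: pickP => [y //|/(_ x)]; rewrite tw_refl. Qed.

Lemma rep_eq x y : tw x y -> rep x = rep y.
Proof.
move=> txy; have E : (fun z => tw x z) =1 (fun z => tw y z).
  move=> z; apply/idP/idP => H; first exact: tw_trans (tw_sym txy) H.
  exact: tw_trans txy H.
by rewrite /rep (eq_pick E); case: pickP => // /(_ y); rewrite tw_refl.
Qed.

Lemma rep_eqP x y : (rep x == rep y) = tw x y.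
Proof.
apply/eqP/idP => [E|]; last exact: rep_eq.
apply: tw_trans (rep_tw x) _; rewrite E; exact: tw_sym (rep_tw y).
Qed.

Lemma rep_idem x : rep (rep x) = rep x.
Proof. by apply: rep_eq; apply: tw_sym; apply: rep_tw. Qed.

Lemma step a b c : tw b c -> a != b -> a != c -> e a b = e a c.
Proof. by move/twP=> H ab ac; rewrite esym H // esym. Qed.

Lemma in_class a x y z w : tw a x -> tw a y -> tw a z -> tw a w ->
  x != y -> z != w -> e x y = e z w.
Proof.
move=> ax ay az aw nxy nzw.
have T2 u v : tw a u -> tw a v -> tw u v by move=> au av; apply: tw_trans (tw_sym au) av.
case: (eqVneq x w) => [xw|xw].
  subst w; rewrite (esym z x).
  case: (eqVneq y z) => [->//|yz]; apply: step => //; first exact: T2.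
  by rewrite eq_sym.
have -> : e x y = e x w.
  case: (eqVneq y w) => [->//|yw]; apply: step => //; exact: T2.
rewrite esym; have -> : e w x = e w z.
  case: (eqVneq x z) => [->//|xz]; apply: step => //; first exact: T2.
  by rewrite eq_sym.
  by rewrite eq_sym.
by rewrite esym.
Qed.

Lemma cross x y x' y' : ~~ tw x y -> tw x x' -> tw y y' -> e x y = e x' y'.
Proof.
move=> nt txx tyy.
have yx' : y != x'.
  by apply/eqP=> E; subst y; move: nt; rewrite txx.
have x'y' : x' != y'.
  apply/eqP=> E; subst y'; move: nt; rewrite (tw_trans txx (tw_sym tyy)).
  by [].
have -> : e x y = e x' y.
  case: (eqVneq x x') => [->//|xx']; rewrite esym (esym x'); apply: step => //.
  by apply/eqP=> E; subst y; move: nt; rewrite tw_refl.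
case: (eqVneq y y') => [->//|yy']; apply: step => //.
by rewrite eq_sym.
Qed.

Notation U := {x : T | rep x == x}.
Definition fU (x : T) : U := exist _ (rep x) (introT eqP (rep_idem x)).

Lemma fU_eq x y : (fU x == fU y) = tw x y.
Proof. by rewrite -val_eqE /= rep_eqP. Qed.

Lemma fU_val (u : U) : fU (val u) = u.
Proof. by apply: val_inj => /=; apply/eqP; exact: (valP u). Qed.

Definition eH (u v : U) := (u != v) && e (val u) (val v).
Definition bU (u : U) := [exists y, (y != val u) && tw (val u) y && e (val u) y].

Lemma connect_fU x y : connect e x y -> connect eH (fU x) (fU y).
Proof.
move/connectP=> [p pth ->]; elim: p x pth => [|z p IH] x /=; first by rewrite connect0.
move/andP=> [exz pth]; apply: connect_trans (IH _ pth).
case: (boolP (tw x z)) => txz; first by move: txz; rewrite -fU_eq => /eqP ->.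
apply: connect1; rewrite /eH fU_eq txz /= -(@cross x z) //; exact: rep_tw.
Qed.

Lemma blowup_of_twins : (forall v, exists y, y != v /\ tw v y) -> in_blowup_family e.
Proof.
move=> Htw; exists U, eH, fU, bU.
split; first split.
- by move=> u v; rewrite /eH eq_sym esym.
- by move=> u; rewrite /eH eqxx.
split; first by move=> u v; rewrite -(fU_val u) -(fU_val v); apply: connect_fU.
split.
  move=> u; have [y [yv tvy]] := Htw (val u).
  have sub : [set val u; y] \subset [set x | fU x == u].
    apply/subsetP=> z; rewrite !inE => /orP[/eqP->|/eqP->]; first by rewrite fU_val.
    by rewrite -(fU_val u) fU_eq; apply: tw_sym.
  by have := subset_leq_card sub; rewrite cards2 eq_sym yv.
move=> x y nxy; rewrite fU_eq; case: ifP => txy.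
  have [z [zr trz]] := Htw (rep x).
  have trx : tw (rep x) x by exact: tw_sym (rep_tw x).
  have try : tw (rep x) y by exact: tw_trans trx txy.
  rewrite /bU /=; rewrite (@in_class (rep x) x y (rep x) z) ?tw_refl // 1?eq_sym //.
  apply/idP/existsP => [ez|[w /andP[/andP[wr trw] ew]]].
    by exists z; rewrite zr trz ez.
  by rewrite (@in_class (rep x) (rep x) z (rep x) w) ?tw_refl // 1?eq_sym.
rewrite /eH fU_eq txy /=; apply: cross; first by rewrite txy.
  exact: rep_tw.
exact: rep_tw.
Qed.

End Twins.

Lemma sum_ge2 (R : realFieldType) (T : finType) (A : {set T}) (h : T -> R) x y :
  (forall z, 0 <= h z)%R -> x != y -> x \in A -> y \in A ->
  (h x + h y <= \sum_(z in A) h z)%R.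
Proof.
move=> h0 nxy xA yA; rewrite (bigD1 x) //= (bigD1 y) /=; last by rewrite yA eq_sym.
by rewrite addrA lerDl sumr_ge0.
Qed.

Lemma sum_set2 (R : realFieldType) (T : finType) (h : T -> R) x y :
  x != y -> (\sum_(z in [set x; y]) h z = h x + h y)%R.
Proof. by move=> nxy; rewrite big_setU1 ?inE // big_set1. Qed.

Lemma Rk_tw (T : finType) (e : rel T) k v y : (1 < #|T|)%N -> (0 < k)%N ->
  Rk e k v y \subset [set v; y] -> tw e v y.
Proof.
move=> N2 k0 /subsetP sub; apply/twP => w wv wy.
have : w \notin Rk e k v y.
  by apply/negP => /sub; rewrite !inE (negbTE wv) (negbTE wy).
rewrite inE negbK => /eqP Ed.
have vw : v != w by rewrite eq_sym.
have yw : y != w by rewrite eq_sym.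
by rewrite -(dist1 e N2 vw) -(dist1 e N2 yw) -!(distk1 e N2 _ _ k0) Ed.
Qed.

Theorem corollary2p9 (R : realFieldType) (T : finType) (e : rel T) (k : nat) :
  simple_graph e -> connected_graph e -> (2 <= #|T|)%N -> (0 < k)%N ->
  (@is_dim_kf T e R k ((#|T|)%:R / 2)%R <-> in_blowup_family e).
Proof.
move=> [esym eirr] Hconn N2 k0; split.
  move=> [_ Hmin]; apply: (blowup_of_twins esym Hconn) => v.
  case: (boolP [exists y, (y != v) && (Rk e k v y \subset [set v; y])]).
    case/existsP => y /andP[yv sub]; exists y; split=> //; exact: (Rk_tw N2 k0 sub).
  move=> /existsPn Hn; exfalso.
  pose h := fun z : T => if z == v then 0%R else (1/2 : R)%R.
  have h0 z : (0 <= h z)%R by rewrite /h; case: ifP => _ //; lra.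
  have key y : y != v -> (1 <= \sum_(z in Rk e k v y) h z)%R.
    move=> yv; have := Hn y; rewrite yv /= => /subsetPn [z zR].
    rewrite !inE negb_or => /andP[zv zy].
    have yz : y != z by rewrite eq_sym.
    have vy : v != y by rewrite eq_sym.
    have := sum_ge2 h0 (yz) (Rk_r e N2 k (vy)) zR.
    by rewrite /h (negbTE yv) (negbTE zv); lra.
  have hres : k_trunc_resolving e k h.
    split; first by move=> z; rewrite /h; case: ifP => _; apply/andP; split; lra.
    move=> x y nxy; case: (eqVneq x v) => [xv|xv].
      by subst x; apply: key; rewrite eq_sym.
    case: (eqVneq y v) => [yv|yv].
      by subst y; rewrite Rk_sym; apply: key.
    have := sum_ge2 h0 nxy (Rk_l e N2 k nxy) (Rk_r e N2 k nxy).
    by rewrite /h (negbTE xv) (negbTE yv); lra.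
  have := Hmin h hres; rewrite (bigD1 v) //= {1}/h eqxx add0r.
  rewrite (eq_bigr (fun _ => (1/2 : R)%R)); last by move=> z /negbTE zv; rewrite /h zv.
  rewrite sumr_const cardC1.
  case: #|T| N2 => [|[|n]] // _.
  rewrite -mulr_natr /= mulrSr; lra.
move=> [U [eH [f [b [HsH [HcH [Hcard He]]]]]]].
have twb x y : f x = f y -> forall w, w != x -> w != y -> e x w = e y w.
  move=> fxy w wx wy; have xw : x != w by rewrite eq_sym.
  have yw : y != w by rewrite eq_sym.
  by rewrite (He x w xw) (He y w yw) fxy.
have Rk2 x y : x != y -> f x = f y -> Rk e k x y = [set x; y].
  by move=> nxy fxy; apply: (Rk_twin eirr N2 k nxy (twb x y fxy)).
have pair (h : T -> R) : k_trunc_resolving e k h ->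
    forall x y, x != y -> f x = f y -> (1 <= h x + h y)%R.
  by move=> [_ hr] x y nxy fxy; have := hr x y nxy; rewrite Rk2 // sum_set2.
split.
  exists (fun _ => (1/2 : R)%R); split; last first.
    by rewrite sumr_const -mulr_natr; lra.
  split => [z|x y nxy]; first by apply/andP; split; lra.
  have h0 : forall z : T, (0 <= (fun _ : T => (1/2:R)) z)%R by move=> z /=; lra.
  apply: le_trans (sum_ge2 h0 nxy (Rk_l e N2 k nxy) (Rk_r e N2 k nxy)) => /=.
  clear -R; lra.
move=> h hres; have [hb _] := hres.
suff : (0 <= \sum_z (h z - 1/2))%R.
  by rewrite sumrB sumr_const -mulr_natr; lra.
rewrite (partition_big f predT) //=; apply: sumr_ge0 => u _.
case: (boolP [exists a, (f a == u) && (h a - 1/2 < 0)%R]).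
  case/existsP=> a /andP[/eqP fa ga].
  have : (0 < #|[set x | f x == u] :\ a|)%N.
    by have := Hcard u; rewrite (cardsD1 a) inE fa eqxx /= add1n.
  rewrite card_gt0 => /set0Pn [c]; rewrite !inE => /andP[ca /eqP fc].
  rewrite (bigD1 a) /=; last by rewrite fa eqxx.
  rewrite (bigD1 c) /=; last by rewrite fc eqxx ca.
  have ac : a != c by rewrite eq_sym.
  have pac := pair h hres a c ac (etrans fa (Logic.eq_sym fc)).
  have rest : (0 <= \sum_(i | (f i == u) && (i != a) && (i != c)) (h i - 1/2))%R.
    apply: sumr_ge0 => i /andP[/andP[/eqP fi ia] ic].
    have ai : a != i by rewrite eq_sym.
    have := pair h hres a i ai (etrans fa (Logic.eq_sym fi)); lra.
  lra.
move/existsPn=> H; apply: sumr_ge0 => i /= fi; have := H i; rewrite fi /= -leNgt.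
by rewrite subr_ge0.
Qed.
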